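(* Let $k\geq 1$ and $n\geq 2$ be integers, let $\Omega>0$ and $0<\sigma\leq m_{\min}$. Then there exist a positive discrete measure $\mu=\sum_{j=1}^{n}a_j\delta_{\mathbf y_j}$ on $\mathbb R^k$ with $n$ distinct supports $\mathbf y_j\in\mathbb R^k$ and amplitudes $a_j>0$, and a positive discrete measure $\hat \mu=\sum_{j=1}^{n-1}\hat a_j \delta_{\hat{\mathbf y}_j}$ on $\mathbb R^k$ with $n-1$ supports and amplitudes $\hat a_j>0$, such that \[ \max_{\boldsymbol\omega\in\mathbb R^k,\ \|\boldsymbol\omega\|_2\leq\Omega}\big|\mathcal F[\hat \mu](\boldsymbol\omega)-\mathcal F [\mu](\boldsymbol\omega)\big|< \sigma, \] and moreover \[ \min_{1\leq j\leq n}|a_j|= m_{\min}, \qquad \min_{p\neq j}\|\mathbf y_p-\mathbf y_j\|_2= \frac{2e^{-1}}{\Omega}\Big(\frac{\sigma}{m_{\min}}\Big)^{\frac{1}{2n-2}}. \]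
   Context: For a discrete measure $\nu=\sum_{j} c_j\delta_{\mathbf x_j}$ on $\mathbb R^k$, its Fourier transform is $\mathcal F[\nu](\boldsymbol\omega)=\sum_j c_j e^{i \mathbf x_j\cdot\boldsymbol\omega}$, $\boldsymbol\omega\in\mathbb R^k$. Here $\Omega>0$ is the cutoff frequency, $\sigma>0$ the noise level and $m_{\min}>0$ a prescribed minimal amplitude. *)

(* Defs.v *)
From HB Require Import structures.
From mathcomp Require Import all_boot all_order all_algebra.
From mathcomp Require Import all_classical all_reals all_analysis.
Set Implicit Arguments. Unset Strict Implicit. Unset Printing Implicit Defensive.
Import Order.TTheory GRing.Theory Num.Theory.
Local Open Scope ring_scope.

Definition dotv {R : realType} {k : nat} (x w : 'rV[R]_k) : R :=
  \sum_(i < k) x ord0 i * w ord0 i.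
Definition norm2 {R : realType} {k : nat} (x : 'rV[R]_k) : R :=
  Num.sqrt (\sum_(i < k) x ord0 i ^+ 2).

(* Fourier transform of the discrete measure nu = sum_j c_j delta_{x_j}:
   F[nu](w) = sum_j c_j e^{i x_j . w}, given by its real and imaginary parts. *)
Definition FT_re {R : realType} {k m : nat} (x : 'I_m -> 'rV[R]_k) (c : 'I_m -> R)
  (w : 'rV[R]_k) : R := \sum_(j < m) c j * cos (dotv (x j) w).
Definition FT_im {R : realType} {k m : nat} (x : 'I_m -> 'rV[R]_k) (c : 'I_m -> R)
  (w : 'rV[R]_k) : R := \sum_(j < m) c j * sin (dotv (x j) w).

Definition FT_diff_abs {R : realType} {k m1 m2 : nat}
  (x1 : 'I_m1 -> 'rV[R]_k) (c1 : 'I_m1 -> R)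
  (x2 : 'I_m2 -> 'rV[R]_k) (c2 : 'I_m2 -> R) (w : 'rV[R]_k) : R :=
  Num.sqrt ((FT_re x1 c1 w - FT_re x2 c2 w) ^+ 2 + (FT_im x1 c1 w - FT_im x2 c2 w) ^+ 2).

(* Main.v *)
Require Import Defs.
From HB Require Import structures.
From mathcomp Require Import all_boot all_order all_algebra.
From mathcomp Require Import all_classical all_reals all_analysis.
From mathcomp Require Import complex.
From mathcomp Require Import ring lra.
Import Order.TTheory GRing.Theory Num.Theory.
Import numFieldNormedType.Exports.
Local Open Scope ring_scope.

Section T.
Context {R : realType}.
Lemma abs_sin_le (x : R) : `|sin x| <= `|x|.
Proof.
wlog x0 : x / 0 <= x.
  move=> H; case: (lerP 0 x) => [/H //|/ltW x0].
  by rewrite -normrN -sinN -(normrN x) H // oppr_ge0.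
have [c _ ] := @MVT_segment R sin cos 0 x x0 (fun y _ => is_derive_sin y)
   (@continuous_subspaceT _ _ _ _ (@continuous_sin R)).
rewrite sin0 !subr0 => ->.
by rewrite normrM -[X in _ <= X]mul1r ler_wpM2r // cos_max.
Qed.

Lemma one_cos_le (x : R) : (1 - cos x) ^+ 2 + sin x ^+ 2 <= x ^+ 2.
Proof.
have -> : (1 - cos x) ^+ 2 + sin x ^+ 2 = 2 - 2 * cos x.
  have h := cos2Dsin2 x.
  transitivity (1 + (cos x ^+ 2 + sin x ^+ 2) - 2 * cos x); first ring.
  by rewrite h; ring.
have hx : x = (x / 2) *+ 2 by rewrite -mulr_natr divfK // pnatr_eq0.
rewrite {1}hx cos_mulr2n.
have := abs_sin_le (x / 2); have := cos2Dsin2 (x / 2).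
set c := cos (x/2); set s := sin (x/2) => h1 h2.
have h3 : s ^+ 2 <= (x / 2) ^+ 2.
  rewrite -(real_normK (num_real s)) -(real_normK (num_real (x/2))) !expr2.
  exact: (ler_pM (normr_ge0 _) (normr_ge0 _) h2 h2).
have -> : 2 - 2 * (c ^+ 2 *+ 2 - 1) = 4 * s ^+ 2.
  transitivity (4 * (c ^+ 2 + s ^+ 2) - 4 * c ^+ 2); last ring.
  by rewrite h1 mulr2n; ring.
have -> : x ^+ 2 = 4 * (x / 2) ^+ 2 by rewrite {1}hx -mulr_natr; ring.
by rewrite ler_pM2l.
Qed.

End T.

Notation Rec := (@complex.Re _).
Notation Imc := (@complex.Im _).
Section S.
Context {R : realType}.
Local Open Scope complex_scope.
Local Open Scope classical_set_scope.

Definition ns (z : R[i]) : R := Rec z ^+ 2 + Imc z ^+ 2.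

Lemma nsM (x y : R[i]) : ns (x * y) = ns x * ns y.
Proof. case: x => a b; case: y => c d; rewrite /ns /=. ring. Qed.

Lemma nsX (x : R[i]) n : ns (x ^+ n) = ns x ^+ n.
Proof. elim: n => [|n IH]; first by rewrite /ns /= expr1n; ring.
by rewrite !exprS nsM IH. Qed.

Lemma ReD (x y : R[i]) : Rec (x + y) = Rec x + Rec y. Proof. by case: x; case: y. Qed.
Lemma ImD (x y : R[i]) : Imc (x + y) = Imc x + Imc y. Proof. by case: x; case: y. Qed.

Lemma Re_sum n (F : 'I_n -> R[i]) : Rec (\sum_(i < n) F i) = \sum_(i < n) Rec (F i).
Proof. by apply: (big_morph _ ReD). Qed.
Lemma Im_sum n (F : 'I_n -> R[i]) : Imc (\sum_(i < n) F i) = \sum_(i < n) Imc (F i).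
Proof. by apply: (big_morph _ ImD). Qed.

Lemma Re_muln (x : R[i]) k : Rec (x *+ k) = Rec x *+ k.
Proof. elim: k => [|k IH]; first by []. by rewrite !mulrS ReD IH. Qed.
Lemma Im_muln (x : R[i]) k : Imc (x *+ k) = Imc x *+ k.
Proof. elim: k => [|k IH]; first by []. by rewrite !mulrS ImD IH. Qed.

Lemma ReCM (c : R) (z : R[i]) : Rec (c%:C * z) = c * Rec z.
Proof. case: z => a b /=. ring. Qed.
Lemma ImCM (c : R) (z : R[i]) : Imc (c%:C * z) = c * Imc z.
Proof. case: z => a b /=. ring. Qed.

Definition E (t : R) : R[i] := cos t +i* sin t.

Lemma EX t n : E t ^+ n = cos (n%:R * t) +i* sin (n%:R * t).
Proof.
elim: n => [|n IH]; first by rewrite expr0 !mul0r cos0 sin0.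
rewrite exprSr IH /E /= -[n.+1]addn1 natrD mulrDl mul1r cosD sinD.
congr (_ +i* _); ring.
Qed.

Lemma ReN1X (z : R[i]) i : Rec ((-1) ^+ i * z) = (-1) ^+ i * Rec z.
Proof. elim: i => [|i IH]; first by rewrite !expr0 !mul1r.
rewrite !exprS -!mulrA mulN1r !mulN1r -IH; by case: ((-1) ^+ i * z). Qed.
Lemma ImN1X (z : R[i]) i : Imc ((-1) ^+ i * z) = (-1) ^+ i * Imc z.
Proof. elim: i => [|i IH]; first by rewrite !expr0 !mul1r.
rewrite !exprS -!mulrA mulN1r !mulN1r -IH; by case: ((-1) ^+ i * z). Qed.

Lemma binom_id (t : R) N :
  (\sum_(i < N.+1) ((-1) ^+ i * 'C(N, i)%:R * cos (i%:R * t))) ^+ 2 +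
  (\sum_(i < N.+1) ((-1) ^+ i * 'C(N, i)%:R * sin (i%:R * t))) ^+ 2
  = ((1 - cos t) ^+ 2 + sin t ^+ 2) ^+ N.
Proof.
have := nsX (1 - E t) N.
rewrite exprBn /ns Re_sum Im_sum.
have -> : Rec (1 - E t) ^+ 2 + Imc (1 - E t) ^+ 2 = (1 - cos t) ^+ 2 + sin t ^+ 2.
  rewrite /E /=. ring.
move=> <-; congr (_ ^+ 2 + _ ^+ 2); apply: eq_bigr => i _.
idtac.
  rewrite Re_muln expr1n mulr1. rewrite ReN1X EX /= -mulr_natr; ring.
rewrite (Im_muln (_ * _)) expr1n mulr1 ImN1X EX /= -mulr_natr; ring.
Qed.

End S.

Lemma sum_split {R : realType} (F : nat -> R) m :
  \sum_(i < (m.*2).+1) F i = \sum_(j < m.+1) F (j.*2) + \sum_(j < m) F (j.*2.+1).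
Proof.
elim: m => [|m IH]; first by rewrite !big_ord1 big_ord0 addr0.
rewrite [LHS]big_ord_recr [in LHS]big_ord_recr /= IH.
rewrite [\sum_(j < m.+2) _]big_ord_recr [\sum_(j < m.+1) F (j.*2.+1)]big_ord_recr /=.
rewrite -!addrA; congr (_ + _); by rewrite [in RHS]addrC -addrA.
Qed.

Section Geo.
Context {R : realType} {k' : nat}.
Definition e0 : 'rV[R]_k'.+1 := \row_i ((i == ord0)%:R).

Lemma dot_e0 (c : R) (w : 'rV[R]_k'.+1) : dotv (c *: e0) w = c * w ord0 ord0.
Proof.
rewrite /dotv (bigD1 ord0) //= big1 ?addr0 => [|i /negbTE ne].
  by rewrite !mxE eqxx mulr1.
by rewrite !mxE ne mulr0 mul0r.
Qed.

Lemma norm_e0 (c : R) : norm2 (c *: e0) = `|c|.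
Proof.
rewrite /norm2 (bigD1 ord0) //= big1 ?addr0 => [|i /negbTE ne].
  by rewrite !mxE eqxx mulr1 sqrtr_sqr.
by rewrite !mxE ne mulr0 expr0n.
Qed.

Lemma norm_ge (w : 'rV[R]_k'.+1) : `|w ord0 ord0| <= norm2 w.
Proof.
rewrite -sqrtr_sqr /norm2 ler_sqrt; last by apply: sumr_ge0 => i _; exact: sqr_ge0.
rewrite (bigD1 ord0) //= lerDl; apply: sumr_ge0 => i _; exact: sqr_ge0.
Qed.
End Geo.

Lemma sepnat {R : realType} (p j : nat) : p != j -> 2 <= `|(p.*2)%:R - (j.*2)%:R : R|.
Proof.
case: (ltngtP p j) => [lt|lt|->]; last by [].
  move=> _; rewrite distrC -natrB; last by rewrite leq_double ltnW.
  rewrite normr_nat ler_nat -doubleB; move: lt; rewrite -subn_gt0.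
  by case: (j - p)%N.
move=> _; rewrite -natrB; last by rewrite leq_double ltnW.
rewrite normr_nat ler_nat -doubleB; move: lt; rewrite -subn_gt0.
by case: (p - j)%N.
Qed.

Theorem theorem3p2 (R : realType) (k n : nat) (Omega sigma mmin : R) :
  (1 <= k)%N -> (2 <= n)%N -> 0 < Omega -> 0 < sigma -> sigma <= mmin ->
  exists (y : 'I_n -> 'rV[R]_k) (a : 'I_n -> R)
         (yh : 'I_n.-1 -> 'rV[R]_k) (ah : 'I_n.-1 -> R),
    injective y /\
    (forall j, 0 < a j) /\
    (forall j, 0 < ah j) /\
    (forall w : 'rV[R]_k, norm2 w <= Omega -> FT_diff_abs yh ah y a w < sigma) /\
    ((exists j, `|a j| = mmin) /\ (forall j, mmin <= `|a j|)) /\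
    (let d := 2 * expR (-1) / Omega * (sigma / mmin) `^ (1 / (2 * n - 2)%:R) in
     (exists p j, p != j /\ norm2 (y p - y j) = d) /\
     (forall p j, p != j -> d <= norm2 (y p - y j))).
Proof.
move=> k1 n2 O0 s0 sm.
case: k k1 => [//|k'] _.
case: n n2 => [|[|m]] // _.
have m0 : 0 < mmin by apply: lt_le_trans sm.
have eN : (2 * m.+2 - 2)%N = (m.+1).*2 by rewrite mul2n.
rewrite eN.
set N := (m.+1).*2.
set rho := sigma / mmin.
have rho0 : 0 < rho by rewrite divr_gt0.
set q := rho `^ (1 / N%:R).
have q0 : 0 < q by rewrite powR_gt0.
have qN : q ^+ N = rho.
  rewrite -powR_mulrn ?ltW // /q -powRrM mul1r mulVf ?powRr1 ?ltW //.
  by rewrite pnatr_eq0.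
set h := expR (-1) / Omega * q.
have h0 : 0 < h by rewrite mulr_gt0 ?divr_gt0 ?expR_gt0.
exists (fun j : 'I_m.+2 => ((j.*2)%:R * h) *: (@e0 R k')).
exists (fun j : 'I_m.+2 => mmin * ('C(N, j.*2))%:R).
exists (fun j : 'I_m.+1 => ((j.*2.+1)%:R * h) *: (@e0 R k')).
exists (fun j : 'I_m.+1 => mmin * ('C(N, j.*2.+1))%:R).
have sepE : forall p j : 'I_m.+2,
    norm2 (((p.*2)%:R * h) *: (@e0 R k') - ((j.*2)%:R * h) *: e0)
    = `|(p.*2)%:R - (j.*2)%:R : R| * h.
  by move=> p j; rewrite -scalerBl -mulrBl norm_e0 normrM (gtr0_norm h0).
split.
  move=> p j e; apply/eqP; apply: contraT => ne.
  have := @sepnat R p j ne; have := sepE p j.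
  rewrite e subrr => H.
  have Hn : norm2 (0 : 'rV[R]_k'.+1) = 0.
    by rewrite /norm2 big1 ?sqrtr0 // => i _; rewrite mxE expr0n.
  move: H; rewrite Hn => /esym/eqP; rewrite mulf_eq0 (gt_eqF h0) orbF => /eqP ->.
  by move=> /(lt_le_trans (ltr0Sn R 1)); rewrite ltxx.
split.
  by move=> j; rewrite mulr_gt0 // ltr0n bin_gt0 /N leq_double -ltnS ltn_ord.
split.
  by move=> j; rewrite mulr_gt0 // ltr0n bin_gt0 /N ltn_double ltn_ord.
split.
  move=> w wO.
  set th := h * w ord0 ord0.
  pose G (i : nat) := (-1) ^+ i * ('C(N, i))%:R * cos (i%:R * th).
  pose H (i : nat) := (-1) ^+ i * ('C(N, i))%:R * sin (i%:R * th).
  have ev : forall j : nat, (-1) ^+ (j.*2) = 1 :> R.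
    by move=> j; rewrite -mul2n exprM sqrrN !expr1n.
  have od : forall j : nat, (-1) ^+ (j.*2.+1) = -1 :> R.
    by move=> j; rewrite exprS ev mulr1.
  have Hre : FT_re (fun j : 'I_m.+1 => ((j.*2.+1)%:R * h) *: (@e0 R k'))
               (fun j : 'I_m.+1 => mmin * ('C(N, j.*2.+1))%:R) w
           - FT_re (fun j : 'I_m.+2 => ((j.*2)%:R * h) *: (@e0 R k'))
               (fun j : 'I_m.+2 => mmin * ('C(N, j.*2))%:R) w
           = - (mmin * \sum_(i < N.+1) G i).
    rewrite (sum_split G) mulrDr opprD addrC; congr (_ + _).
      congr (- _); rewrite /FT_re big_distrr; apply: eq_bigr => j _ /=.
      rewrite dot_e0 /G ev.
      have -> : (j.*2)%:R * h * w ord0 ord0 = (j.*2)%:R * th by rewrite /th mulrA.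
      ring.
    rewrite /FT_re -mulrN -sumrN big_distrr; apply: eq_bigr => j _ /=.
    rewrite dot_e0 /G od.
    have -> : (j.*2.+1)%:R * h * w ord0 ord0 = (j.*2.+1)%:R * th by rewrite /th mulrA.
    ring.
  have Him : FT_im (fun j : 'I_m.+1 => ((j.*2.+1)%:R * h) *: (@e0 R k'))
               (fun j : 'I_m.+1 => mmin * ('C(N, j.*2.+1))%:R) w
           - FT_im (fun j : 'I_m.+2 => ((j.*2)%:R * h) *: (@e0 R k'))
               (fun j : 'I_m.+2 => mmin * ('C(N, j.*2))%:R) w
           = - (mmin * \sum_(i < N.+1) H i).
    rewrite (sum_split H) mulrDr opprD addrC; congr (_ + _).
      congr (- _); rewrite /FT_im big_distrr; apply: eq_bigr => j _ /=.
      rewrite dot_e0 /H ev.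
      have -> : (j.*2)%:R * h * w ord0 ord0 = (j.*2)%:R * th by rewrite /th mulrA.
      ring.
    rewrite /FT_im -mulrN -sumrN big_distrr; apply: eq_bigr => j _ /=.
    rewrite dot_e0 /H od.
    have -> : (j.*2.+1)%:R * h * w ord0 ord0 = (j.*2.+1)%:R * th by rewrite /th mulrA.
    ring.
  rewrite /FT_diff_abs Hre Him !sqrrN !exprMn -mulrDr /G /H binom_id.
  rewrite -[X in _ < X](ger0_norm (ltW s0)) -sqrtr_sqr ltr_sqrt ?exprn_gt0 //.
  set X := (1 - cos th) ^+ 2 + sin th ^+ 2.
  have X0 : 0 <= X by rewrite addr_ge0 ?sqr_ge0.
  have hO : h * Omega = expR (-1) * q by rewrite /h mulrAC divfK ?gt_eqF.
  have Xle : X <= (h * Omega) ^+ 2.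
    apply: le_trans (one_cos_le th) _.
    rewrite -(real_normK (num_real th)) /th normrM (gtr0_norm h0).
    apply: lerXn2r; rewrite ?nnegrE; last by rewrite ler_pM2l // (le_trans (norm_ge w)).
    - by apply: mulr_ge0; [exact: ltW | exact: normr_ge0].
    - by apply: mulr_ge0; exact: ltW.
  have XN : X ^+ N <= (expR (-1) ^+ N * rho) ^+ 2.
    rewrite -qN -exprMn -hO -exprM mulnC exprM.
    by apply: lerXn2r => //; rewrite nnegrE ?sqr_ge0.
  have E0 : 0 <= (expR (-1) : R) ^+ N by apply: exprn_ge0; exact: expR_ge0.
  have E1 : (expR (-1) : R) ^+ N < 1.
    by rewrite (exprn_ilt1 _ (expR_ge0 _)) // expR_lt1 oppr_lt0.
  apply: (le_lt_trans (ler_wpM2l (sqr_ge0 _) XN)).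
  rewrite -exprMn.
  have -> : mmin * (expR (-1) ^+ N * rho) = expR (-1) ^+ N * sigma.
    by rewrite /rho mulrCA [mmin * _]mulrC divfK ?gt_eqF.
  rewrite ltrXn2r //; first exact: mulr_ge0 E0 (ltW s0).
  by rewrite gtr_pMl.
split.
  split.
    by exists ord0 => /=; rewrite bin0 mulr1 gtr0_norm.
  move=> j; rewrite ger0_norm; last by apply: mulr_ge0; [exact: ltW | exact: ler0n].
  have hC : (1 : R) <= (binomial N j.*2)%:R by rewrite ler1n bin_gt0 /N leq_double -ltnS ltn_ord.
  by rewrite -[X in X <= _]mulr1 (ler_wpM2l (ltW m0)).

move=> d.
have dE : d = 2 * h by rewrite /d /h !mulrA.
split.
  exists ord0, (@Ordinal m.+2 1 isT); split => //.
  rewrite sepE dE; congr (_ * _).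
  by rewrite /= mulr0n sub0r normrN normr_nat.
move=> p j ne; rewrite sepE dE ler_pM2r //.
exact: (@sepnat R p j ne).
Qed.
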